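(* Let $U$ be an $n\times n$ unitary matrix and let $b$ be a positive integer smaller than $n/2$. Let $I=\{(j,k): j,k=1,\dots,n,\ |j-k|\le b\text{ or }n-|j-k|\le b\}$ and let $U^{(band)}$ be the $n\times n$ matrix with entries $U^{(band)}_{jk}=U_{jk}$ for $(j,k)\in I$ and $U^{(band)}_{jk}=0$ otherwise. Then there exist positive constants $C_1,C_2$, independent of $n$ and $b$, such that $$\|U^{(band)}\|\le C_1\ln b+C_2.$$
   Context: $\|\cdot\|$ denotes the operator norm. *)

(* Defs.v *)
From HB Require Import structures.
From mathcomp Require Import all_boot all_order all_algebra.
From mathcomp Require Import all_classical all_reals.
From mathcomp Require Import exp.
From mathcomp.real_closed Require Import complex.
Set Implicit Arguments. Unset Strict Implicit. Unset Printing Implicit Defensive.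
Import Order.TTheory GRing.Theory Num.Theory.
Local Open Scope ring_scope.
Local Open Scope classical_set_scope.

Definition cabs2 (R : realType) (z : R[i]) : R :=
  (complex.Re z) ^+ 2 + (complex.Im z) ^+ 2.

Definition vnorm (R : realType) (n : nat) (v : 'cV[R[i]]_n) : R :=
  Num.sqrt (\sum_(j < n) cabs2 (v j 0)).

Definition opnorm (R : realType) (n : nat) (A : 'M[R[i]]_n) : R :=
  sup [set vnorm (A *m v) | v in [set v : 'cV[R[i]]_n | vnorm v <= 1]].

Definition adjoint (R : realType) (n : nat) (A : 'M[R[i]]_n) : 'M[R[i]]_n :=
  (map_mx (@conjc R) A)^T.
Definition unitary (R : realType) (n : nat) (U : 'M[R[i]]_n) : Prop :=
  adjoint U *m U = 1%:M.

(* Periodic band: |j-k| <= b or n-|j-k| <= b (0-based indices, same distances). *)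
Definition in_band (n b : nat) (j k : 'I_n) : bool :=
  let d := ((j - k) + (k - j))%N in ((d <= b) || (n - d <= b))%N.

Definition band (R : realType) (n b : nat) (U : 'M[R[i]]_n) : 'M[R[i]]_n :=
  \matrix_(j, k) (if in_band b j k then U j k else 0).

(* Main.v *)
Require Import Defs.
From HB Require Import structures.
From mathcomp Require Import all_boot all_order all_algebra.
From mathcomp Require Import all_classical all_reals.
From mathcomp Require Import exp.
From mathcomp.real_closed Require Import complex.
From mathcomp Require Import ring lra zify.
Import Order.TTheory GRing.Theory Num.Theory.
Local Open Scope ring_scope.
Set Implicit Arguments. Unset Strict Implicit. Unset Printing Implicit Defensive.
Definition nsq (R : realType) n (v : 'cV[R[i]]_n) : R := \sum_(j < n) cabs2 (v j 0).
Definition cadj (R : realType) m p (A : 'M[R[i]]_(m,p)) : 'M[R[i]]_(p,m) :=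
  (map_mx (@conjc R) A)^T.

Lemma Re_sum (R : realType) (I : Type) (s : seq I) (F : I -> R[i]) :
  complex.Re (\sum_(i <- s) F i) = \sum_(i <- s) complex.Re (F i).
Proof.
elim: s => [|x s IH]; first by rewrite !big_nil.
by rewrite !big_cons -IH; case: (F x) => a b; case: (\sum_(i <- s) F i).
Qed.

Lemma Im_sum (R : realType) (I : Type) (s : seq I) (F : I -> R[i]) :
  complex.Im (\sum_(i <- s) F i) = \sum_(i <- s) complex.Im (F i).
Proof.
elim: s => [|x s IH]; first by rewrite !big_nil.
by rewrite !big_cons -IH; case: (F x) => a b; case: (\sum_(i <- s) F i).
Qed.

Lemma cabs2E (R : realType) (z : R[i]) : cabs2 z = complex.Re (conjc z * z).
Proof. by case: z => a b; rewrite /cabs2 /=; ring. Qed.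

Lemma cabs2_ge0 (R : realType) (z : R[i]) : 0 <= cabs2 z.
Proof. by rewrite /cabs2 addr_ge0 // sqr_ge0. Qed.

Lemma nsq_ge0 (R : realType) n (v : 'cV[R[i]]_n) : 0 <= nsq v.
Proof. by apply: sumr_ge0 => j _; apply: cabs2_ge0. Qed.

Lemma nsqE (R : realType) n (v : 'cV[R[i]]_n) :
  nsq v = complex.Re ((cadj v *m v) 0 0).
Proof.
rewrite /nsq !mxE Re_sum; apply: eq_bigr => j _.
by rewrite !mxE cabs2E.
Qed.

Lemma cadjM (R : realType) m p q (A : 'M[R[i]]_(m,p)) (B : 'M[R[i]]_(p,q)) :
  cadj (A *m B) = cadj B *m cadj A.
Proof. by rewrite /cadj map_mxM trmx_mul. Qed.

Lemma nsq_unitary (R : realType) n (U : 'M[R[i]]_n) (w : 'cV[R[i]]_n) :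
  unitary U -> nsq (U *m w) = nsq w.
Proof.
move=> HU; rewrite !nsqE cadjM -mulmxA (mulmxA (cadj U)).
have -> : cadj U *m U = 1%:M by exact: HU.
by rewrite mul1mx.
Qed.

Lemma sq_sum (R : realType) (I : Type) (s : seq I) (a : I -> R) :
  (\sum_(i <- s) a i) ^+ 2 <= (size s)%:R * \sum_(i <- s) a i ^+ 2.
Proof.
elim: s => [|x s IH]; first by rewrite !big_nil expr0n /= mulr0.
rewrite !big_cons /=; move: IH.
set S := \sum_(i <- s) a i; set Q := \sum_(i <- s) a i ^+ 2.
set K : R := (size s)%:R.
move=> IH.
have K0 : 0 <= K by rewrite /K ler0n.
have Q0 : 0 <= Q by apply: sumr_ge0 => i _; apply: sqr_ge0.
have key : 2 * a x * S <= K * a x ^+ 2 + Q.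
  have [Kz|Kp] := eqVneq K 0.
    rewrite Kz in IH; have : S ^+ 2 <= 0 by rewrite mul0r in IH.
    move=> H; have S0 : S = 0 by apply/eqP; rewrite -sqrf_eq0 eq_le H sqr_ge0.
    by rewrite S0 mulr0 Kz mul0r add0r.
  have Kpos : 0 < K by rewrite lt_def Kp K0.
  have H1 : K * (2 * a x * S) <= K * (K * a x ^+ 2 + Q).
    have := sqr_ge0 (K * a x - S); nra.
  by rewrite ler_pM2l in H1.
rewrite -natr1 /= -/K.
nra.
Qed.

Lemma cabs2_sum (R : realType) (I : Type) (s : seq I) (z : I -> R[i]) :
  cabs2 (\sum_(i <- s) z i) <= (size s)%:R * \sum_(i <- s) cabs2 (z i).
Proof.
rewrite /cabs2 Re_sum Im_sum big_split /= mulrDr.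
by apply: lerD; apply: sq_sum.
Qed.

Lemma nsq_sum (R : realType) n (I : Type) (s : seq I) (x : I -> 'cV[R[i]]_n) :
  nsq (\sum_(i <- s) x i) <= (size s)%:R * \sum_(i <- s) nsq (x i).
Proof.
rewrite /nsq [X in _ <= _ * X]exchange_big /= mulr_sumr.
apply: ler_sum => j _.
rewrite summxE; exact: cabs2_sum.
Qed.

Lemma sum_uniq_eq (R : realType) (T : eqType) (s : seq T) (x : T) (c : R) :
  uniq s -> \sum_(L <- s) (if x == L then c else 0) = if x \in s then c else 0.
Proof.
elim: s => [|y s IH]; first by rewrite big_nil.
rewrite big_cons /= => /andP[ys us]; rewrite IH // in_cons.
case: eqP => [->|_] /=; last by rewrite add0r.
by rewrite (negbTE ys) addr0.
Qed.

Definition mk (n : nat) (T : eqType) (f g : 'I_n -> option T) (j k : 'I_n) : bool :=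
  (f j != None) && (f j == g k).

Definition maskmx (R : realType) n (T : eqType) (f g : 'I_n -> option T)
  (A : 'M[R[i]]_n) : 'M[R[i]]_n :=
  \matrix_(j, k) (if mk f g j k then A j k else 0).

Lemma mask_bound (R : realType) n (T : eqType) (f g : 'I_n -> option T)
  (U : 'M[R[i]]_n) (v : 'cV[R[i]]_n) :
  unitary U -> nsq (maskmx f g U *m v) <= nsq v.
Proof.
move=> HU.
pose w (L : option T) : 'cV[R[i]]_n := \col_k (if g k == L then v k 0 else 0).
pose h j := if f j != None then cabs2 ((U *m w (f j)) j 0) else 0.
have E : forall j, cabs2 ((maskmx f g U *m v) j 0) = h j.
  move=> j; rewrite /h !mxE; case: ifP => Hf.
    congr cabs2; apply: eq_bigr => k _; rewrite !mxE /mk Hf /= eq_sym.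
    by case: eqP => _; rewrite ?mul0r ?mulr0.
  rewrite big1; first by rewrite /cabs2 /= expr0n /= addr0.
  by move=> k _; rewrite !mxE /mk Hf /= mul0r.
set s := undup [seq f j | j <- enum 'I_n].
have us : uniq s by apply: undup_uniq.
have Hs : forall j, f j \in s.
  by move=> j; rewrite mem_undup; apply: map_f; rewrite mem_enum.
rewrite /nsq (eq_bigr _ (fun j _ => E j)).
have -> : \sum_(j < n) h j = \sum_(j < n) \sum_(L <- s) (if f j == L then h j else 0).
  by apply: eq_bigr => j _; rewrite sum_uniq_eq // Hs.
rewrite exchange_big /=.
apply: (@le_trans _ _ (\sum_(L <- s) (if L != None then nsq (w L) else 0))).
  apply: ler_sum => L _.
  case: eqP => [->|HL] /=.
    by rewrite big1 // => j _; case: eqP => // Hj; rewrite /h Hj eqxx.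
  rewrite -(nsq_unitary (w L) HU); apply: ler_sum => j _.
  case: eqP => [Hj|_]; last by apply: cabs2_ge0.
  by rewrite /h Hj; case: eqP.
have -> : \sum_(L <- s) (if L != None then nsq (w L) else 0) =
   \sum_(k < n) \sum_(L <- s) (if g k == L then
         (if L != None then cabs2 (v k 0) else 0) else 0).
  rewrite exchange_big /=; apply: eq_bigr => L _.
  case: ifP => HL.
    rewrite /nsq; apply: eq_bigr => k _; rewrite mxE; case: eqP => //.
    by rewrite /cabs2 /= expr0n /= addr0.
  by rewrite big1 // => k _; case: ifP.
apply: ler_sum => k _.
apply: (@le_trans _ _ (\sum_(L <- s) (if g k == L then cabs2 (v k 0) else 0))).
  apply: ler_sum => L _; case: ifP => // _; case: ifP => // _; exact: cabs2_ge0.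
rewrite sum_uniq_eq //; case: ifP => // _; exact: cabs2_ge0.
Qed.

Lemma sum_const_le (R : realType) (I : Type) (s : seq I) (F : I -> R) (c : R) :
  (forall i, F i <= c) -> \sum_(i <- s) F i <= (size s)%:R * c.
Proof.
move=> H; elim: s => [|x s IH]; first by rewrite big_nil mul0r.
by rewrite big_cons /= -natr1 mulrDl mul1r addrC lerD.
Qed.

Lemma opnorm_masks (R : realType) n (T : eqType)
  (ms : seq ((('I_n -> option T) * ('I_n -> option T))%type)) (U : 'M[R[i]]_n) :
  unitary U -> opnorm (\sum_(m <- ms) maskmx m.1 m.2 U) <= (size ms)%:R.
Proof.
move=> HU; set K : R := (size ms)%:R.
have K0 : 0 <= K by rewrite ler0n.
apply: ge_sup.
  exists (vnorm ((\sum_(m <- ms) maskmx m.1 m.2 U) *m 0)), 0 => //=.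
  by rewrite /vnorm big1 ?sqrtr0 // => j _; rewrite mxE /cabs2 /= expr0n /= addr0.
move=> _ [v Hv <-].
have Hv1 : nsq v <= 1.
  by move: Hv => /=; rewrite /vnorm -{1}sqrtr1 ler_sqrt.
have -> : forall x, vnorm x = Num.sqrt (nsq x) by [].
have -> : (\sum_(m <- ms) maskmx m.1 m.2 U) *m v = \sum_(m <- ms) (maskmx m.1 m.2 U *m v).
  by elim: ms {K K0} => [|m ms IH]; rewrite ?big_nil ?mul0mx // !big_cons mulmxDl IH.
have H1 := nsq_sum ms (fun m => maskmx m.1 m.2 U *m v).
have H2 : \sum_(m <- ms) nsq (maskmx m.1 m.2 U *m v) <= K.
  have := @sum_const_le R _ ms (fun m => nsq (maskmx m.1 m.2 U *m v)) 1.
  rewrite mulr1; apply => m.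
  exact: le_trans (@mask_bound R n T m.1 m.2 U v HU) Hv1.
have H3 : nsq (\sum_(m <- ms) maskmx m.1 m.2 U *m v) <= K ^+ 2.
  apply: le_trans H1 _; rewrite expr2; exact: ler_wpM2l.
rewrite -(ger0_norm K0) -sqrtr_sqr ler_sqrt //; exact: sqr_ge0.
Qed.
Local Open Scope nat_scope.

Definition tt0 (l x y : nat) : nat :=
  ((x %/ 2 ^ l.+1 == y %/ 2 ^ l.+1) && odd (x %/ 2 ^ l) && ~~ odd (y %/ 2 ^ l) : nat).

Lemma tt0S l x y : tt0 l.+1 x y = tt0 l (x %/ 2) (y %/ 2).
Proof. by rewrite /tt0 !(expnS 2) !divnMA. Qed.

Lemma tt0S' l x y : tt0 (1 + l) x y = tt0 l (x %/ 2) (y %/ 2).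
Proof. by rewrite add1n tt0S. Qed.

Lemma bits L : forall x y, (x < 2 ^ L)%N -> (y < 2 ^ L)%N ->
  ((y <= x)%N : nat) = ((x == y) : nat) + \sum_(l <- iota 0 L) tt0 l x y.
Proof.
elim: L => [|L IH] x y.
  rewrite expn0 !ltnS !leqn0 => /eqP-> /eqP->; by rewrite big_nil.
move=> Hx Hy.
have Hx' : (x %/ 2 < 2 ^ L)%N by rewrite ltn_divLR // -expnSr.
have Hy' : (y %/ 2 < 2 ^ L)%N by rewrite ltn_divLR // -expnSr.
have HS := IH _ _ Hx' Hy'.
change (iota 0 L.+1) with (0 :: iota (1 + 0) L).
rewrite big_cons (iotaDl 1 0 L) big_map.
under eq_bigr => l _ do rewrite tt0S'.
move: HS; set S := \sum_(l <- iota 0 L) _ => HS.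
rewrite /tt0 expn0 expn1 !divn1.
rewrite -[x in (_ <= x)%N](odd_double_half x) -[y in (y <= _)%N](odd_double_half y).
rewrite -[x in (x == _)](odd_double_half x) -[y in (_ == y)](odd_double_half y).
rewrite !divn2 in HS *.
move: HS; clearbody S; case: (odd x); case: (odd y); rewrite /= -!muln2; move: (x./2) (y./2) => a b; lia.
Qed.

Definition lev n (l : nat) (a : 'I_n -> option (nat * nat)) (o : bool) (j : 'I_n)
  : option (nat * nat) :=
  match a j with
  | Some (B, x) => if odd (x %/ 2 ^ l) == o then Some (B, x %/ 2 ^ l.+1) else None
  | None => None end.

Definition tri n (a c : 'I_n -> option (nat * nat)) (L : nat) :=
  (a, c) :: [seq (lev l a true, lev l c false) | l <- iota 0 L].

Definition trim n (a c : 'I_n -> option (nat * nat)) (j k : 'I_n) : nat :=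
  match a j, c k with
  | Some (B, x), Some (B', y) => ((B == B') && (y <= x))
  | _, _ => false end.

Definition posb n (a : 'I_n -> option (nat * nat)) (L : nat) :=
  forall j, if a j is Some (_, x) then x < 2 ^ L else true.

Lemma SomeE (T : eqType) (a b : T) : (Some a == Some b) = (a == b).
Proof. by []. Qed.

Lemma tri_count n (a c : 'I_n -> option (nat * nat)) L j k :
  posb a L -> posb c L ->
  \sum_(m <- tri a c L) (mk m.1 m.2 j k : nat) = trim a c j k.
Proof.
move=> Ha Hc; rewrite big_cons big_map /mk /trim /lev /=.
move: (Ha j) (Hc k); case: (a j) => [[B x]|]; case: (c k) => [[B' y]|] //= Hx Hy;
  last first.
- by rewrite big1.
- by rewrite big1.
- by rewrite big1 // => l _; case: ifP.
case: (eqVneq B B') => [<-|hB] /=.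
  rewrite (bits Hx Hy); congr (_ + _).
    by rewrite SomeE xpair_eqE eqxx.
  apply: eq_bigr => l _; rewrite /tt0.
  case: (odd (x %/ 2 ^ l)); case: (odd (y %/ 2 ^ l));
    by rewrite /= ?SomeE ?xpair_eqE ?eqxx ?andbT ?andbF.
rewrite SomeE xpair_eqE (negbTE hB) /= big1 // => l _.
case: (odd (x %/ 2 ^ l)); case: (odd (y %/ 2 ^ l));
  by rewrite /= ?SomeE ?xpair_eqE ?(negbTE hB).
Qed.
Local Open Scope nat_scope.

Lemma arith0 (n b j k Q q jr kr : nat) : 0 < b -> 2 * b < n -> j < n -> k < n ->
  j = Q * b + jr -> k = q * b + kr -> jr < b -> kr < b ->
  ((((j - k) + (k - j) <= b) || (n - ((j - k) + (k - j)) <= b)) : nat) =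
   (Q == q) + ((0 < q) && (Q == q - 1) && (kr <= jr))
   + ((Q == q + 1) && (b - 1 - kr <= b - 1 - jr))
   + ((j < b) && (n - b <= k) && (b - 1 - (k - (n - b)) <= b - 1 - j))
   + ((n - b <= j) && (k < b) && (k <= j - (n - b))).
Proof.
move=> b0 nb jn kn ej ek hj hk.
have [H|[H|[H|[H|H]]]] : Q = q \/ Q = q + 1 \/ q = Q + 1 \/ q + 2 <= Q \/ Q + 2 <= q by lia.
- have E : Q * b = q * b by rewrite H.
  move: E ej ek; move: (Q * b) (q * b) => PQ Pq E ej ek.
  have -> : ((j - k) + (k - j) <= b) = true by lia.
  have -> : (Q == q) = true by lia.
  have -> : (0 < q) && (Q == q - 1) && (kr <= jr) = false by lia.
  have -> : (Q == q + 1) = false by lia.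
  have -> : (j < b) && (n - b <= k) && (b - 1 - (k - (n - b)) <= b - 1 - j) = false by lia.
  have -> : (n - b <= j) && (k < b) && (k <= j - (n - b)) = false by lia.
  done.
- have E : Q * b = q * b + b by rewrite H mulnDl mul1n.
  move: E ej ek; move: (Q * b) (q * b) => PQ Pq E ej ek.
  have -> : (Q == q) = false by lia.
  have -> : (0 < q) && (Q == q - 1) && (kr <= jr) = false by lia.
  have -> : (j < b) && (n - b <= k) && (b - 1 - (k - (n - b)) <= b - 1 - j) = false by lia.
  have -> : ((j - k) + (k - j) <= b) = ((Q == q + 1) && (b - 1 - kr <= b - 1 - jr)) by lia.
  have -> : (n - ((j - k) + (k - j)) <= b) = ((n - b <= j) && (k < b) && (k <= j - (n - b))) by lia.
  case E3: ((Q == q + 1) && (b - 1 - kr <= b - 1 - jr)); case E5: ((n - b <= j) && (k < b) && (k <= j - (n - b))) => //=; lia.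
- have E : q * b = Q * b + b by rewrite H mulnDl mul1n.
  move: E ej ek; move: (Q * b) (q * b) => PQ Pq E ej ek.
  have -> : (Q == q) = false by lia.
  have -> : (Q == q + 1) && (b - 1 - kr <= b - 1 - jr) = false by lia.
  have -> : (n - b <= j) && (k < b) && (k <= j - (n - b)) = false by lia.
  have -> : ((j - k) + (k - j) <= b) = ((0 < q) && (Q == q - 1) && (kr <= jr)) by lia.
  have -> : (n - ((j - k) + (k - j)) <= b) = ((j < b) && (n - b <= k) && (b - 1 - (k - (n - b)) <= b - 1 - j)) by lia.
  case E2: ((0 < q) && (Q == q - 1) && (kr <= jr)); case E4: ((j < b) && (n - b <= k) && (b - 1 - (k - (n - b)) <= b - 1 - j)) => //=; lia.
- have E : q * b + 2 * b <= Q * b by rewrite -mulnDl leq_mul2r H orbT.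
  move: E ej ek; move: (Q * b) (q * b) => PQ Pq E ej ek.
  have -> : ((j - k) + (k - j) <= b) = false by lia.
  have -> : (Q == q) = false by lia.
  have -> : (0 < q) && (Q == q - 1) && (kr <= jr) = false by lia.
  have -> : (Q == q + 1) && (b - 1 - kr <= b - 1 - jr) = false by lia.
  have -> : (j < b) && (n - b <= k) && (b - 1 - (k - (n - b)) <= b - 1 - j) = false by lia.
  have -> : (n - ((j - k) + (k - j)) <= b) = ((n - b <= j) && (k < b) && (k <= j - (n - b))) by lia.
  by case: ((n - b <= j) && (k < b) && (k <= j - (n - b))).
- have E : Q * b + 2 * b <= q * b by rewrite -mulnDl leq_mul2r H orbT.
  move: E ej ek; move: (Q * b) (q * b) => PQ Pq E ej ek.
  have -> : ((j - k) + (k - j) <= b) = false by lia.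
  have -> : (Q == q) = false by lia.
  have -> : (0 < q) && (Q == q - 1) && (kr <= jr) = false by lia.
  have -> : (Q == q + 1) && (b - 1 - kr <= b - 1 - jr) = false by lia.
  have -> : (n - b <= j) && (k < b) && (k <= j - (n - b)) = false by lia.
  have -> : (n - ((j - k) + (k - j)) <= b) = ((j < b) && (n - b <= k) && (b - 1 - (k - (n - b)) <= b - 1 - j)) by lia.
  by case: ((j < b) && (n - b <= k) && (b - 1 - (k - (n - b)) <= b - 1 - j)).
Qed.

Local Open Scope nat_scope.
Definition blk n b : 'I_n -> option (nat * nat) := fun j => Some (j %/ b, 0).
Definition a2 n b : 'I_n -> option (nat * nat) := fun j => Some (j %/ b, j %% b).
Definition c2 n b : 'I_n -> option (nat * nat) := fun k =>
  if 0 < k %/ b then Some (k %/ b - 1, k %% b) else None.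
Definition a3 n b : 'I_n -> option (nat * nat) := fun j => Some (j %/ b, b - 1 - j %% b).
Definition c3 n b : 'I_n -> option (nat * nat) := fun k => Some (k %/ b + 1, b - 1 - k %% b).
Definition a4 n b : 'I_n -> option (nat * nat) := fun j =>
  if j < b then Some (0, b - 1 - j) else None.
Definition c4 n b : 'I_n -> option (nat * nat) := fun k =>
  if n - b <= k then Some (0, b - 1 - (k - (n - b))) else None.
Definition a5 n b : 'I_n -> option (nat * nat) := fun j =>
  if n - b <= j then Some (0, j - (n - b)) else None.
Definition c5 n b : 'I_n -> option (nat * nat) := fun k =>
  if k < b then Some (0, nat_of_ord k) else None.

Definition mss n b L :=
  (@blk n b, @blk n b) :: (tri (@a2 n b) (@c2 n b) L ++ tri (@a3 n b) (@c3 n b) L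
     ++ tri (@a4 n b) (@c4 n b) L ++ tri (@a5 n b) (@c5 n b) L).

Lemma size_mss n b L : size (mss n b L) = 4 * L + 5.
Proof. rewrite /mss /tri /=; do 5 rewrite ?(size_cat, size_map, size_iota) /=; lia. Qed.

Lemma band_count n b L (j k : 'I_n) : 0 < b -> 2 * b < n -> b <= 2 ^ L ->
  \sum_(m <- mss n b L) (mk m.1 m.2 j k : nat) = in_band b j k.
Proof.
move=> b0 nb bL.
have pos : forall (a : 'I_n -> option (nat * nat)),
    (forall j, if a j is Some (_, x) then x < b else true) -> posb a L.
  move=> a Ha j'; move: (Ha j'); case: (a j') => // [[_ x]] hx.
  exact: leq_trans hx bL.
have P2 : posb (@a2 n b) L /\ posb (@c2 n b) L /\ posb (@a3 n b) L /\ posb (@c3 n b) L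
   /\ posb (@a4 n b) L /\ posb (@c4 n b) L /\ posb (@a5 n b) L /\ posb (@c5 n b) L.
  by split; [|split; [|split; [|split; [|split; [|split; [|split]]]]]]; apply: pos => x;
    rewrite /a2 /c2 /a3 /c3 /a4 /c4 /a5 /c5; try case: ifP => // _;
    move: (ltn_ord x) (ltn_pmod x b0); lia.
case: P2 => [? [? [? [? [? [? [? ?]]]]]]].
rewrite /mss big_cons !big_cat !tri_count //.
have e1 : mk (@blk n b) (@blk n b) j k = (j %/ b == k %/ b).
  by rewrite /mk /blk /= SomeE xpair_eqE eqxx andbT.
have e2 : trim (@a2 n b) (@c2 n b) j k =
    ((0 < k %/ b) && (j %/ b == k %/ b - 1) && (k %% b <= j %% b)).
  by rewrite /trim /a2 /c2; case: ifP.
have e3 : trim (@a3 n b) (@c3 n b) j k =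
    ((j %/ b == k %/ b + 1) && (b - 1 - k %% b <= b - 1 - j %% b)).
  by [].
have e4 : trim (@a4 n b) (@c4 n b) j k =
    ((j < b) && (n - b <= k) && (b - 1 - (k - (n - b)) <= b - 1 - j)).
  by rewrite /trim /a4 /c4; case: (j < b); case: (n - b <= k); rewrite /= ?andbF.
have e5 : trim (@a5 n b) (@c5 n b) j k =
    ((n - b <= j) && (k < b) && (k <= j - (n - b))).
  by rewrite /trim /a5 /c5; case: (n - b <= j); case: (k < b); rewrite /= ?andbF.
rewrite e1 e2 e3 e4 e5 /in_band /=.
rewrite (arith0 b0 nb (ltn_ord j) (ltn_ord k) (divn_eq j b) (divn_eq k b)
  (ltn_pmod j b0) (ltn_pmod k b0)).
lia.
Qed.

Local Open Scope ring_scope.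

Lemma sum_if_nat (R : realType) (I : Type) (s : seq I) (P : I -> bool) (x : R[i]) :
  \sum_(m <- s) (if P m then x else 0) = x *+ (\sum_(m <- s) (P m : nat))%N.
Proof.
elim: s => [|y s IH]; first by rewrite !big_nil.
by rewrite !big_cons IH mulrnDr; case: (P y); rewrite ?add0r.
Qed.

Lemma band_masks (R : realType) n b L (U : 'M[R[i]]_n) :
  (0 < b)%N -> (2 * b < n)%N -> (b <= 2 ^ L)%N ->
  band b U = \sum_(m <- mss n b L) maskmx m.1 m.2 U.
Proof.
move=> b0 nb bL; apply/matrixP => j k.
rewrite summxE !mxE.
rewrite (eq_bigr (fun m => if mk m.1 m.2 j k then U j k else 0)); last first.
  by move=> m _; rewrite mxE.
rewrite sum_if_nat band_count //.
by case: (in_band b j k).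
Qed.

Theorem lemma4p2 (R : realType) :
  exists C1 C2 : R, 0 < C1 /\ 0 < C2 /\
    forall (n b : nat) (U : 'M[R[i]]_n),
      unitary U -> (0 < b)%N -> (2 * b < n)%N ->
      opnorm (band b U) <= C1 * ln (b%:R) + C2.
Proof.
have ln2 : 0 < ln (2 : R) by apply: ln_gt0; rewrite ltr1n.
exists (4 / ln 2), 9; split; first by rewrite divr_gt0.
split; first by rewrite ltr0n.
move=> n b U HU b0 nb.
set t := trunc_log 2 b.
have bL : (b <= 2 ^ t.+1)%N by apply: ltnW; apply: trunc_log_ltn.
rewrite (band_masks U b0 nb bL).
apply: le_trans (opnorm_masks _ HU) _.
rewrite size_mss.
have Ht : (2 ^ t <= b)%N by apply: trunc_logP.
have H1 : ln 2 *+ t <= ln (b%:R : R).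
  rewrite -lnXn ?ltr0n // ler_ln ?posrE ?exprn_gt0 ?ltr0n //.
  by rewrite -natrX ler_nat.
have H2 : t%:R <= ln (b%:R : R) / ln 2.
  by rewrite ler_pdivlMr // mulrC mulr_natr.
have -> : (4 * t.+1 + 5)%N = (4 * t + 9)%N by lia.
rewrite natrD natrM.
have : 4 * t%:R <= 4 / ln 2 * ln (b%:R : R).
  by rewrite mulrAC -mulrA ler_pM2l // ?ltr0n // mulrC.
lra.
Qed.
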